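(* Consider the delay differential system \[ \begin{aligned} \dot T(t)&= s-dT(t)+aT(t)\Big(1-\frac{T(t)+I(t)}{T_{\max}}\Big)-\frac{bT(t)V(t)}{1+\alpha V(t)},\\ \dot I(t)&= \frac{bT(t-\tau)V(t-\tau)}{1+\alpha V(t-\tau)}+aI(t)\Big(1-\frac{T(t)+I(t)}{T_{\max}}\Big)-\mu I(t),\\ \dot V(t)&= pI(t)-cV(t), \end{aligned} \] with positive constants $s,d,a,T_{\max},b,\alpha,\mu,p,c$ and $\tau\ge0$. Let \[ T_0=\frac{T_{\max}}{2a}\Big(a-d+\sqrt{(a-d)^2+\tfrac{4as}{T_{\max}}}\Big),\qquad R_0=\frac{1}{\mu}\Big[\frac{bpT_0}{c}+a\Big(1-\frac{T_0}{T_{\max}}\Big)\Big], \] and let $E_1=(T_0,0,0)$ be the infection-free equilibrium. If $R_0>1$, then the characteristic equation of the linearization at $E_1$ has a positive real root, so $E_1$ is unstable; if $R_0<1$, then $E_1$ is locally asymptotically stable for every $\tau\ge0$.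
   Context: $E_1$ is a constant solution of the system. Local stability refers to the linearization of the delay system at the equilibrium. *)

(* Defs.v *)
From HB Require Import structures.
From mathcomp Require Import all_boot all_order all_algebra.
From mathcomp Require Import all_classical all_reals all_analysis.
From mathcomp Require Import complex.
Set Implicit Arguments. Unset Strict Implicit. Unset Printing Implicit Defensive.
Import Order.TTheory GRing.Theory Num.Theory.
Local Open Scope ring_scope.

Section Model.
Variable R : realType.
Variables (s d a Tmax b alpha mu p c : R).

Definition cT (x : 'cV[R]_3) : R := x (inord 0) 0.
Definition cI (x : 'cV[R]_3) : R := x (inord 1) 0.
Definition cV (x : 'cV[R]_3) : R := x (inord 2) 0.

Definition mkst (T I V : R) : 'cV[R]_3 := \col_(i < 3) [:: T; I; V]`_i.

(* right-hand side of the delay system: x = state at time t, xd = state at time t - tau *)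
Definition rhsT (x xd : 'cV[R]_3) : R :=
  s - d * cT x + a * cT x * (1 - (cT x + cI x) / Tmax)
  - b * cT x * cV x / (1 + alpha * cV x).
Definition rhsI (x xd : 'cV[R]_3) : R :=
  b * cT xd * cV xd / (1 + alpha * cV xd)
  + a * cI x * (1 - (cT x + cI x) / Tmax) - mu * cI x.
Definition rhsV (x xd : 'cV[R]_3) : R := p * cI x - c * cV x.

Definition rhs (x xd : 'cV[R]_3) : 'cV[R]_3 := mkst (rhsT x xd) (rhsI x xd) (rhsV x xd).

Definition T0 : R :=
  Tmax / (2 * a) * (a - d + Num.sqrt ((a - d) ^+ 2 + 4 * a * s / Tmax)).

Definition R0 : R := mu^-1 * (b * p * T0 / c + a * (1 - T0 / Tmax)).

Definition E1 : 'cV[R]_3 := mkst T0 0 0.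

Definition jac0 : 'M[R]_3 :=
  \matrix_(i < 3, j < 3) derive1 (fun h : R => rhs (E1 + h *: delta_mx j 0) E1 i 0) 0.
Definition jac1 : 'M[R]_3 :=
  \matrix_(i < 3, j < 3) derive1 (fun h : R => rhs E1 (E1 + h *: delta_mx j 0) i 0) 0.

End Model.

Local Open Scope complex_scope.
Definition cexp (R : realType) (z : R[i]) : R[i] :=
  (expR (complex.Re z) * cos (complex.Im z)) +i* (expR (complex.Re z) * sin (complex.Im z)).

(* characteristic function of the linearization x'(t) = A0 x(t) + A1 x(t - tau):
   Delta(lambda) = det(lambda I - A0 - e^{-lambda tau} A1) *)
Definition charfun (R : realType) (s d a Tmax b alpha mu p c tau : R) (lam : R[i]) : R[i] :=
  \det (lam%:M - map_mx (fun r : R => r%:C) (jac0 s d a Tmax b alpha mu p c)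
        - cexp (- (lam * tau%:C)) *: map_mx (fun r : R => r%:C) (jac1 s d a Tmax b alpha mu p c)).

(* Main.v *)
Require Import Defs.
From HB Require Import structures.
From mathcomp Require Import all_boot all_order all_algebra ring lra.
From mathcomp Require Import all_classical all_reals all_analysis.
From mathcomp Require Import complex.
Import Order.TTheory GRing.Theory Num.Theory numFieldNormedType.Exports.
Local Open Scope ring_scope.

Section Der.
Variable R : realType.
Lemma dD (f g : R -> R) (x df dg : R) : is_derive x (1:R) f df -> is_derive x (1:R) g dg ->
  is_derive x (1:R) (fun h => f h + g h) (df + dg).
Proof. move=> ? ?; exact: is_deriveD. Qed.
Lemma dN (f : R -> R) (x df : R) : is_derive x (1:R) f df ->
  is_derive x (1:R) (fun h => - f h) (- df).
Proof. move=> ?; exact: is_deriveN. Qed.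
Lemma dM (f g : R -> R) (x df dg : R) : is_derive x (1:R) f df -> is_derive x (1:R) g dg ->
  is_derive x (1:R) (fun h => f h * g h) (f x * dg + g x * df).
Proof. move=> ? ?; exact: is_deriveM. Qed.
Lemma dV (f : R -> R) (x df : R) : f x != 0 -> is_derive x (1:R) f df ->
  is_derive x (1:R) (fun y => (f y)^-1) (- (f x) ^- 2 * df).
Proof.
move=> fx0 H; apply: DeriveDef.
  apply: derivableV => //; exact: ex_derive.
by rewrite deriveV // ?derive_val //; exact: ex_derive.
Qed.
Lemma did (x : R) : is_derive x (1:R) (fun h => h) 1.
Proof. exact: is_derive_id. Qed.
Lemma dc (x k : R) : is_derive x (1:R) (fun _ => k) 0.
Proof. exact: is_derive_cst. Qed.
Lemma der_eq (F : R -> R) df d' : is_derive (0:R) 1 F df -> df = d' -> derive1 F 0 = d'.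
Proof. move=> H <-; rewrite derive1E; exact: derive_val. Qed.

Ltac chain := repeat first [apply: dc | apply: did | apply: dD | apply: dN | apply: dM | apply: dV].
Let sE : forall x y : R, x *: y = x * y. Proof. by []. Qed.

Lemma derT (s d a Tm b al T u0 u1 u2 : R) :
  derive1 (fun h => s - d * (T + h*u0) + a * (T + h*u0) * (1 - ((T + h*u0) + h*u1) / Tm)
     - b * (T + h*u0) * (h*u2) / (1 + al * (h*u2))) 0 =
  - d * u0 + a * u0 * (1 - T/Tm) - a * T * (u0 + u1) / Tm - b * T * u2.
Proof.
eapply der_eq. chain.
  by rewrite mul0r mulr0 addr0 oner_eq0.
rewrite /= !(mul0r, mulr0, add0r, addr0, scale0r, scaler0, mul1r, mulr1) !sE invr1; ring.
Qed.

Lemma derI0 (a Tm mu K T u0 u1 : R) :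
  derive1 (fun h => K + a * (h*u1) * (1 - ((T + h*u0) + h*u1) / Tm) - mu * (h*u1)) 0 =
  a * u1 * (1 - T/Tm) - mu * u1.
Proof.
eapply der_eq. chain.
rewrite /= !(mul0r, mulr0, add0r, addr0, scale0r, scaler0, mul1r, mulr1) !sE; ring.
Qed.

Lemma derV0 (p c u1 u2 : R) :
  derive1 (fun h => p * (h*u1) - c * (h*u2)) 0 = p * u1 - c * u2.
Proof.
eapply der_eq. chain.
rewrite /= !(mul0r, mulr0, add0r, addr0, scale0r, scaler0, mul1r, mulr1) !sE; ring.
Qed.

Lemma derI1 (b al K1 K2 T u0 u2 : R) :
  derive1 (fun h => b * (T + h*u0) * (h*u2) / (1 + al * (h*u2)) + K1 - K2) 0 = b * T * u2.
Proof.
eapply der_eq. chain.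
  by rewrite mul0r mulr0 addr0 oner_eq0.
rewrite /= !(mul0r, mulr0, add0r, addr0, scale0r, scaler0, mul1r, mulr1) !sE invr1; ring.
Qed.

Lemma derC (K : R) : derive1 (fun _ : R => K) 0 = 0.
Proof. eapply der_eq. apply: dc. by []. Qed.
End Der.

Lemma det3 (K : comNzRingType) (M : 'M[K]_3) :
  let m (i j : nat) := M (inord i) (inord j) in
  \det M = m 0 0 * (m 1 1 * m 2%N 2%N - m 1%N 2%N * m 2%N 1%N)
         - m 0 1 * (m 1 0 * m 2%N 2%N - m 1%N 2%N * m 2%N 0%N)
         + m 0%N 2%N * (m 1 0 * m 2%N 1%N - m 1 1 * m 2%N 0%N).
Proof.
move=> m.
rewrite (expand_det_row _ ord0) !big_ord_recl big_ord0 /cofactor.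
rewrite !(expand_det_row _ ord0) !big_ord_recl !big_ord0 /cofactor !det_mx11 !mxE /=.
have E : forall i j : 'I_3, M i j = m i j by move=> i j; rewrite /m !inord_val.
rewrite !E /m /bump /= !expr0 !expr1. ring.
Qed.

Section Model2.
Variable R : realType.
Variables (s d a Tmax b alpha mu p c : R).
Local Notation T0 := (T0 s d a Tmax).
Local Notation E1 := (E1 s d a Tmax).

Lemma inord3E (i j : nat) : (i < 3)%N -> (j < 3)%N -> ((inord i : 'I_3) == inord j) = (i == j).
Proof. by move=> hi hj; rewrite -(inj_eq val_inj) /= !(@inordK 2). Qed.

Definition uu (j : 'I_3) (k : nat) : R := (val j == k)%:R.

Lemma cTh (j : 'I_3) h : cT (E1 + h *: delta_mx j 0) = T0 + h * uu j 0.
Proof.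
by rewrite /cT /E1 /mkst !mxE (@inordK 2 0) // /= andbT -(inj_eq val_inj) /= (@inordK 2 0) // eq_sym.
Qed.
Lemma cIh (j : 'I_3) h : cI (E1 + h *: delta_mx j 0) = h * uu j 1.
Proof.
by rewrite /cI /E1 /mkst !mxE (@inordK 2 1) // /= andbT -(inj_eq val_inj) /= (@inordK 2 1) // eq_sym add0r.
Qed.
Lemma cVh (j : 'I_3) h : cV (E1 + h *: delta_mx j 0) = h * uu j 2.
Proof.
by rewrite /cV /E1 /mkst !mxE (@inordK 2 2) // /= andbT -(inj_eq val_inj) /= (@inordK 2 2) // eq_sym add0r.
Qed.

Lemma rhsE (x y : 'cV[R]_3) :
  [/\ rhs s d a Tmax b alpha mu p c x y (inord 0) 0 = rhsT s d a Tmax b alpha x y,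
      rhs s d a Tmax b alpha mu p c x y (inord 1) 0 = rhsI a Tmax b alpha mu x y &
      rhs s d a Tmax b alpha mu p c x y (inord 2) 0 = rhsV p c x y].
Proof. by rewrite /rhs /mkst !mxE (@inordK 2 0) // (@inordK 2 1) // (@inordK 2 2). Qed.

Local Notation J0 := (jac0 s d a Tmax b alpha mu p c).
Local Notation J1 := (jac1 s d a Tmax b alpha mu p c).

Lemma J00 j : J0 (inord 0) j =
  - d * uu j 0 + a * uu j 0 * (1 - T0/Tmax) - a * T0 * (uu j 0 + uu j 1) / Tmax - b * T0 * uu j 2.
Proof.
rewrite mxE -(@derT R s d a Tmax b alpha T0). congr derive1; apply/funext => h.
by case: (rhsE (E1 + h *: delta_mx j 0) E1) => -> _ _; rewrite /rhsT cTh cIh cVh.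
Qed.
Lemma J01 j : J0 (inord 1) j = a * uu j 1 * (1 - T0/Tmax) - mu * uu j 1.
Proof.
rewrite mxE -(@derI0 R a Tmax mu (b * cT E1 * cV E1 / (1 + alpha * cV E1)) T0 (uu j 0)).
congr derive1; apply/funext => h.
by case: (rhsE (E1 + h *: delta_mx j 0) E1) => _ -> _; rewrite /rhsI cTh cIh.
Qed.
Lemma J02 j : J0 (inord 2) j = p * uu j 1 - c * uu j 2.
Proof.
rewrite mxE -(@derV0 R p c (uu j 1) (uu j 2)). congr derive1; apply/funext => h.
by case: (rhsE (E1 + h *: delta_mx j 0) E1) => _ _ ->; rewrite /rhsV cIh cVh.
Qed.
Lemma J10 j : J1 (inord 0) j = 0.
Proof.
rewrite mxE; apply: (etrans _ (@derC R (rhsT s d a Tmax b alpha E1 E1))). congr derive1; apply/funext => h.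
by case: (rhsE E1 (E1 + h *: delta_mx j 0)) => -> _ _.
Qed.
Lemma J11 j : J1 (inord 1) j = b * T0 * uu j 2.
Proof.
rewrite mxE -(@derI1 R b alpha (a * cI E1 * (1 - (cT E1 + cI E1) / Tmax)) (mu * cI E1) T0 (uu j 0)).
congr derive1; apply/funext => h.
by case: (rhsE E1 (E1 + h *: delta_mx j 0)) => _ -> _; rewrite /rhsI cTh cVh.
Qed.
Lemma J12 j : J1 (inord 2) j = 0.
Proof.
rewrite mxE; apply: (etrans _ (@derC R (rhsV p c E1 E1))). congr derive1; apply/funext => h.
by case: (rhsE E1 (E1 + h *: delta_mx j 0)) => _ _ ->.
Qed.

Local Open Scope complex_scope.
Lemma entE (lam e : R[i]) (A B : 'M[R]_3) i j :
  (lam%:M - map_mx (fun r : R => r%:C) A - e *: map_mx (fun r : R => r%:C) B) i j =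
  lam *+ (i == j) - (A i j)%:C - e * (B i j)%:C.
Proof. by rewrite !mxE. Qed.
Definition m11 := - d + a * (1 - T0/Tmax) - a * T0 / Tmax.
Definition kk := a * (1 - T0/Tmax) - mu.
Lemma charfunE tau (lam : R[i]) :
  charfun s d a Tmax b alpha mu p c tau lam =
  (lam - m11%:C) * ((lam - kk%:C) * (lam + c%:C) - cexp (- (lam * tau%:C)) * (b * p * T0)%:C).
Proof.
rewrite /charfun det3 !entE.
rewrite !J00 !J01 !J02 !J10 !J11 !J12 /uu /= ?(@inordK 2 0) // ?(@inordK 2 1) // ?(@inordK 2 2) //.
rewrite !inord3E //= /m11 /kk.
move: T0 (cexp _) => T e. rewrite ?(mulr0, mul0r, mulr1, mul1r, addr0, add0r, subr0, sub0r, mulr1n, mulr0n, rmorph0, oppr0, subrr). rewrite !(rmorphB, rmorphD, rmorphM, rmorphN, rmorph1, fmorphV). ring.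
Qed.
End Model2.

Section Cont.
Variable R : realType.
Implicit Types f g : R -> R.
Lemma cD f g (x : R) : {for x, continuous f} -> {for x, continuous g} ->
  {for x, continuous (fun h => f h + g h)}.
Proof. move=> ? ?; exact: continuousD. Qed.
Lemma cN f (x : R) : {for x, continuous f} -> {for x, continuous (fun h => - f h)}.
Proof. move=> ?; exact: continuousN. Qed.
Lemma cM f g (x : R) : {for x, continuous f} -> {for x, continuous g} ->
  {for x, continuous (fun h => f h * g h)}.
Proof. move=> ? ?; exact: continuousM. Qed.
Lemma cE f (x : R) : {for x, continuous f} -> {for x, continuous (fun h => expR (f h))}.
Proof. move=> cf; apply: (continuous_comp cf); exact: continuous_expR. Qed.
Lemma cid (x : R) : {for x, continuous (fun h : R => h)}.
Proof. exact: cvg_id. Qed.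
Lemma cc (x k : R) : {for x, continuous (fun _ : R => k)}.
Proof. exact: cst_continuous. Qed.
End Cont.

Ltac cchain := repeat first [apply: cc | apply: cid | apply: cD | apply: cN | apply: cM | apply: cE].

Local Open Scope complex_scope.

Lemma cexp_real (R : realType) (r : R) : cexp (r%:C) = (expR r)%:C.
Proof. by rewrite /cexp /= cos0 sin0 mulr1 mulr0. Qed.

Theorem mainTheorem3 (R : realType) (s d a Tmax b alpha mu p c tau : R)
  (hs : 0 < s) (hd : 0 < d) (ha : 0 < a) (hTmax : 0 < Tmax) (hb : 0 < b)
  (halpha : 0 < alpha) (hmu : 0 < mu) (hp : 0 < p) (hc : 0 < c) (htau : 0 <= tau) :
  (1 < R0 s d a Tmax b mu p c ->
     exists lam : R, 0 < lam /\ charfun s d a Tmax b alpha mu p c tau lam%:C = 0) /\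
  (R0 s d a Tmax b mu p c < 1 ->
     forall lam : R[i], charfun s d a Tmax b alpha mu p c tau lam = 0 -> complex.Re lam < 0).
Proof.
set S := Num.sqrt ((a - d) ^+ 2 + 4 * a * s / Tmax).
have h4 : 0 < 4 * a * s / Tmax by rewrite !mulr_gt0 // invr_gt0.
have Spos : 0 < (a - d) ^+ 2 + 4 * a * s / Tmax.
  have := sqr_ge0 (a - d). lra.
have S2 : S ^+ 2 = (a - d) ^+ 2 + 4 * a * s / Tmax by rewrite sqr_sqrtr // ltW.
have S0 : 0 < S by rewrite sqrtr_gt0.
have T0E : T0 s d a Tmax = Tmax / (2 * a) * (a - d + S) by [].
have SgtAD : d - a < S.
  have h1 : (a - d) ^+ 2 < S ^+ 2 by rewrite S2; lra.
  case: (lerP (d - a) 0) => hda; first lra.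
  rewrite -[(a - d)^+2]sqrrN opprB in h1.
  nra.
have T0pos : 0 < T0 s d a Tmax.
  rewrite T0E; apply: mulr_gt0; first by rewrite divr_gt0 // mulr_gt0.
  lra.
have m11E : m11 R s d a Tmax = - S.
  rewrite /m11 T0E; field; lra.
have R0E : R0 s d a Tmax b mu p c = mu^-1 * (b * p * T0 s d a Tmax / c + kk R s d a Tmax mu + mu).
  rewrite /R0 /kk; congr (_ * _); ring.
set T := T0 s d a Tmax in T0pos R0E m11E *.
set K := kk R s d a Tmax mu in R0E *.
split.
  move=> hR.
  have hK : 0 < b * p * T / c + K.
    have : 0 < mu^-1 * (b * p * T / c + K).
      by move: hR; rewrite R0E mulrDr mulVf ?gt_eqF //; lra.
    by rewrite pmulr_rgt0 // invr_gt0.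
  have hB : 0 < b * p * T by apply: mulr_gt0 => //; apply: mulr_gt0.
  set B := b * p * T in hK hB *.
  set q := B / c in hK.
  have hq0 : 0 < q by rewrite /q; apply: divr_gt0.
  have hq : B = q * c by rewrite /q mulfVK ?gt_eqF.
  pose g := fun x : R => (x - K) * (x + c) - expR (- (x * tau)) * B.
  pose L := `|K| + q + 1.
  have hKn : K <= `|K| := ler_norm K.
  have hg0 : g 0 < 0.
    rewrite /g mul0r oppr0 expR0 mul1r sub0r add0r.
    have : 0 < B + K * c by rewrite hq; nra.
    nra.
  have hL0 : 0 <= L by rewrite /L; have := normr_ge0 K; lra.
  have hgL : 0 < g L.
    rewrite /g.
    have hE : expR (- (L * tau)) <= 1 by rewrite expR_le1 oppr_le0 mulr_ge0.
    have hE0 : 0 < expR (- (L * tau)) := expR_gt0 _.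
    have h1 : q + 1 <= L - K by rewrite /L; lra.
    have h2 : c <= L + c by lra.
    have h3 : (q + 1) * c <= (L - K) * (L + c) by nra.
    have h5 : expR (- (L * tau)) * B <= B by nra.
    nra.
  have cg : forall x : R, {for x, continuous g}.
    by move=> x; rewrite /g; cchain.
  have [x0 hx0 gx0] : exists2 x0, x0 \in `[0, L] & g x0 = 0.
    apply: IVT => //; first exact: continuous_subspaceT.
    move: (g 0) (g L) hg0 hgL => u v hu hv.
    have hn : `|u - v| = v - u by rewrite ltr0_norm ?opprB //; lra.
    rewrite minr_absE maxr_absE hn; apply/andP; split; lra.
  have x0pos : 0 < x0.
    move: hx0; rewrite in_itv /= => /andP [h0 _].
    rewrite lt_neqAle h0 andbT; apply/eqP => e0.
    by move: hg0; rewrite {1}e0 gx0 ltxx.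
  exists x0; split => //.
  have ce : cexp (- (x0%:C * tau%:C)) = (expR (- (x0 * tau)))%:C.
    by rewrite -cexp_real rmorphN rmorphM.
  rewrite charfunE ce.
  have -> : (x0%:C - (kk R s d a Tmax mu)%:C) * (x0%:C + c%:C) -
      (expR (- (x0 * tau)))%:C * (b * p * T0 s d a Tmax)%:C = (g x0)%:C.
    by rewrite /g !(rmorphB, rmorphM, rmorphD).
  by rewrite gx0 mulr0.
move=> hR lam H.
rewrite charfunE in H.
move/eqP: H; rewrite mulf_eq0 => /orP [/eqP H|/eqP H].
  by move/subr0_eq: H => ->; rewrite m11E /=; lra.
have hK : b * p * T / c + K < 0.
  have : mu^-1 * (b * p * T / c + K) < 0.
    by move: hR; rewrite R0E mulrDr mulVf ?gt_eqF //; lra.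
  by rewrite pmulr_rlt0 // invr_gt0.
rewrite ltNge; apply/negP => hx.
case: lam H hx => x y H hx.
rewrite /= in hx.
move: H; rewrite /cexp.
have -> : complex.Re (- ((x +i* y) * tau%:C)) = - (x * tau).
  by rewrite /= mulr0 subr0.
set th := complex.Im _.
have hE1 : expR (- (x * tau)) <= 1 by rewrite expR_le1 oppr_le0 mulr_ge0.
have hE0 : 0 < expR (- (x * tau)) := expR_gt0 _.
have cs := cos2Dsin2 th.
move: (expR _) hE1 hE0 => E hE1 hE0.
move: (cos th) (sin th) cs => co si cs.
rewrite -/K -/T.
move/eqP; rewrite eq_complex /= => /andP [/eqP h1 /eqP h2].
rewrite !(subr0, addr0, mulr0) in h1 h2.
set B := b * p * T in hK h1 h2.
have hB : 0 < B by rewrite /B; apply: mulr_gt0 => //; apply: mulr_gt0.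
set q := B / c in hK.
have hq0 : 0 < q by rewrite /q; apply: divr_gt0.
have hq : B = q * c by rewrite /q mulfVK ?gt_eqF.
have hu : (x - K) * (x + c) - y * y = E * co * B by lra.
have hv : (x - K) * y + y * (x + c) = E * si * B by lra.
have key : ((x - K) ^+ 2 + y ^+ 2) * ((x + c) ^+ 2 + y ^+ 2) = (E * B) ^+ 2.
  have -> : ((x - K) ^+ 2 + y ^+ 2) * ((x + c) ^+ 2 + y ^+ 2) =
    ((x - K) * (x + c) - y * y) ^+ 2 + ((x - K) * y + y * (x + c)) ^+ 2 by ring.
  rewrite hu hv.
  have -> : (E * co * B) ^+ 2 + (E * si * B) ^+ 2 = (E * B) ^+ 2 * (co ^+ 2 + si ^+ 2) by ring.
  by rewrite cs mulr1.
have hEB : (E * B) ^+ 2 <= B ^+ 2.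
  have : E * B <= B by nra.
  have : 0 < E * B by rewrite mulr_gt0.
  nra.
have hge : ((x - K) * (x + c)) ^+ 2 <= ((x - K) ^+ 2 + y ^+ 2) * ((x + c) ^+ 2 + y ^+ 2).
  have -> : ((x - K) ^+ 2 + y ^+ 2) * ((x + c) ^+ 2 + y ^+ 2) =
     ((x - K) * (x + c)) ^+ 2 + y ^+ 2 * ((x - K) ^+ 2 + (x + c) ^+ 2 + y ^+ 2) by ring.
  rewrite lerDl; apply: mulr_ge0; first exact: sqr_ge0.
  by rewrite !addr_ge0 ?sqr_ge0.
have hgt : B < (x - K) * (x + c).
  have h1' : q < x - K by lra.
  have h2' : c <= x + c by lra.
  rewrite hq; nra.
have : B ^+ 2 < ((x - K) * (x + c)) ^+ 2.
  have hP : 0 < (x - K) * (x + c) by lra.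
  nra.
lra.
Qed.
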